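(* Let $\mathsf{X}$ be a finite connected graph with no tails and with $l$ ramified vertices, and suppose $\mathsf{X}$ has a segment decomposition into segments $\mathsf{S}^1,\dots,\mathsf{S}^k$, where $\mathsf{S}^1,\dots,\mathsf{S}^{k'}$ are the 2-segments and $\mathsf{S}^{k'+1},\dots,\mathsf{S}^k$ the 1-segments. Let $\mathsf{T}$ be a spanning tree of $\mathsf{X}$ and set $\mathsf{T}^i=\mathsf{T}\cap\mathsf{S}^i$. Then $\mathsf{T}^i$ is a spanning tree of the 2-segment $\mathsf{S}^i$ for exactly $l-1$ indices $i$.
   Context: Graphs are finite and undirected, possibly with multiple edges and loops. Some vertices are designated ramified; the others are unramified. A tail is an unramified vertex with exactly one neighbour joined to it by exactly one edge. For ramified $v,v'$, an admissible path from $v$ to $v'$ is a path whose intermediate vertices are all unramified (closed if $v=v'$). Segment decomposition: colour each admissible path between distinct ramified vertices so that paths sharing an edge receive the same colour; this must be possible with all paths of a colour joining the same pair of ramified vertices, and each colour class (union of its paths) is a 2-segment (contains exactly two ramified vertices). Every remaining edge lies on an admissible closed path at one ramified vertex through unramified vertices not in any 2-segment; colouring these closed paths likewise (paths sharing an edge get the same colour, no already coloured edge reused) gives the 1-segments (exactly one ramified vertex). The segments are pairwise edge-disjoint, share no unramified vertex, and cover $\mathsf{X}$; a segment with $t$ ramified vertices is a $t$-segment. *)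

(* Defs.v *)
(* Finite multigraphs with loops:
   vertices V, edges E, each edge has an (unordered) pair of endpoints ends e. *)
From mathcomp Require Import all_boot.
Set Implicit Arguments. Unset Strict Implicit. Unset Printing Implicit Defensive.

Section Graphs.
Variables (V E : finType) (ends : E -> V * V).

Definition joins (e : E) (x y : V) : bool :=
  (ends e == (x, y)) || (ends e == (y, x)).

Definition incident (e : E) (v : V) : bool :=
  ((ends e).1 == v) || ((ends e).2 == v).

(* a walk from x is a list of steps (edge, next vertex), using only edges of F *)
Fixpoint is_walk_in (F : {set E}) (x : V) (s : seq (E * V)) : bool :=
  if s is (e, y) :: s' then [&& e \in F, joins e x y & is_walk_in F y s'] else true.

Definition walk_end (x : V) (s : seq (E * V)) : V := last x (map snd s).

(* intermediate vertices x_1 .. x_{n-1} of the walk x_0 x_1 .. x_n *)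
Definition interior (s : seq (E * V)) : seq V := take (size s).-1 (map snd s).

Definition is_path_in (F : {set E}) (x y : V) (s : seq (E * V)) : bool :=
  [&& s != [::], is_walk_in F x s, walk_end x s == y,
      uniq (map snd s), uniq (map fst s) & x \notin interior s].

Definition connected_in (Vs : {set V}) (F : {set E}) : Prop :=
  forall x y, x \in Vs -> y \in Vs ->
    exists s, is_walk_in F x s && (walk_end x s == y).

(* no cycle (closed path, including loops and pairs of parallel edges) *)
Definition acyclic_in (F : {set E}) : Prop :=
  forall x s, ~~ is_path_in F x x s.

Definition is_spanning_tree (Vs : {set V}) (F : {set E}) : Prop :=
  [/\ (forall e, e \in F -> (ends e).1 \in Vs /\ (ends e).2 \in Vs),
      connected_in Vs F & acyclic_in F].

Definition graph_connected : Prop := connected_in setT setT.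

(* neighbours of v (v itself is a neighbour if there is a loop at v) *)
Definition neighbours (v : V) : {set V} := [set u | [exists e, joins e v u]].

Definition is_tail (R : {set V}) (v : V) : Prop :=
  v \notin R /\ exists u, neighbours v = [set u] /\ #|[set e | joins e v u]| = 1.

Definition admissible_path (R : {set V}) (r r' : V) (s : seq (E * V)) : Prop :=
  [/\ r \in R, r' \in R, is_path_in setT r r' s & all (fun v => v \notin R) (interior s)].

Definition seg_vertices (k : nat) (seg : E -> 'I_k) (i : 'I_k) : {set V} :=
  [set v | [exists e, (seg e == i) && incident e v]].

Definition in_no_2segment (k k' : nat) (seg : E -> 'I_k) (v : V) : bool :=
  [forall i : 'I_k, (i < k') ==> (v \notin seg_vertices seg i)].

(* Segment decomposition into k segments, given by the colouring seg of the
   edges; colours i < k' are the 2-segments, colours k' <= i < k the 1-segments. *)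
Definition segment_decomposition (R : {set V}) (k k' : nat) (seg : E -> 'I_k) : Prop :=
  [/\ k' <= k,
      (forall i : 'I_k, exists e, seg e == i),
      (forall i : 'I_k, #|seg_vertices seg i :&: R| = (if i < k' then 2 else 1)),
      ((forall r r' s, r != r' -> admissible_path R r r' s ->
          exists2 i : 'I_k, i < k' & all (fun p => seg p.1 == i) s) /\
       (forall e, seg e < k' ->
          exists r r' s, [/\ r != r', admissible_path R r r' s & e \in map fst s])) &
      [/\ (forall r s, admissible_path R r r s ->
             all (in_no_2segment k' seg) (interior s) ->
             exists2 i : 'I_k, k' <= i & all (fun p => seg p.1 == i) s),
          (forall e, k' <= seg e ->
             exists r s, [/\ admissible_path R r r s,
                             all (in_no_2segment k' seg) (interior s) & e \in map fst s]),
          (forall (i j : 'I_k) v, i != j -> v \in seg_vertices seg i ->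
             v \in seg_vertices seg j -> v \in R) &
          (* the segments cover all vertices (edges are covered since seg is total) *)
          (forall v, exists i, v \in seg_vertices seg i)]].

End Graphs.

(* Main.v *)
Require Import Defs.
From mathcomp Require Import all_boot.
From mathcomp Require Import zify.
Set Implicit Arguments. Unset Strict Implicit. Unset Printing Implicit Defensive.

Section Walks.
Variables (V E : finType) (ends : E -> V * V).

Definition adj (F : {set E}) : rel V := fun x y => [exists e in F, joins ends e x y].
Definition conn F := connect (adj F).

Lemma joins_sym e x y : joins ends e x y = joins ends e y x.
Proof. by rewrite /joins orbC. Qed.

Lemma adj_sym F : symmetric (adj F).
Proof.
move=> x y; apply/existsP/existsP => [] [e He]; exists e; by rewrite joins_sym.
Qed.

Lemma conn_sym F : connect_sym (adj F).
Proof. exact: sym_connect_sym (@adj_sym F). Qed.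

Lemma joins_inc e x y : joins ends e x y -> incident ends e x /\ incident ends e y.
Proof.
by rewrite /joins /incident => /orP [] /eqP ->; rewrite /= !eqxx ?orbT.
Qed.

Lemma joins_eq e x y w u : joins ends e x y -> joins ends e w u -> u = x \/ u = y.
Proof.
rewrite /joins => /orP [] /eqP -> /orP [] /eqP [] -> ->; auto.
Qed.

Lemma walk_cat (F : {set E}) (x : V) (s1 s2 : seq (E * V)) : is_walk_in ends F x (s1 ++ s2) =
  is_walk_in ends F x s1 && is_walk_in ends F (walk_end x s1) s2.
Proof.
elim: s1 x => [|[e y] s IH] x //=. by rewrite IH !andbA.
Qed.

Lemma walk_end_cat (x : V) (s1 s2 : seq (E * V)) : walk_end x (s1 ++ s2) = walk_end (walk_end x s1) s2.
Proof. by rewrite /walk_end map_cat last_cat. Qed.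

Lemma walk_end_cons (x : V) (e : E) (y : V) (s : seq (E * V)) : walk_end x ((e, y) :: s) = walk_end y s.
Proof. by []. Qed.

Lemma walk_mono (F G : {set E}) (x : V) (s : seq (E * V)) : F \subset G -> is_walk_in ends F x s -> is_walk_in ends G x s.
Proof.
move=> FG; elim: s x => [|[e y] s IH] x //= /and3P [eF -> Hs].
by rewrite (subsetP FG _ eF) IH.
Qed.

Lemma walk_conn (F : {set E}) (x : V) (s : seq (E * V)) : is_walk_in ends F x s -> conn F x (walk_end x s).
Proof.
elim: s x => [|[e y] s IH] x /=; first by rewrite /walk_end /= => _; exact: connect0.
move=> /and3P [eF Hj Hs]; rewrite walk_end_cons.
apply: connect_trans (IH _ Hs); apply: connect1; apply/existsP; exists e; by rewrite eF.
Qed.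

Lemma conn_walk (F : {set E}) (x y : V) : conn F x y -> exists s, is_walk_in ends F x s && (walk_end x s == y).
Proof.
case/connectP => p; elim: p x => [|z p IH] x /=; first by move=> _ ->; exists [::]; rewrite /= eqxx.
case/andP => /existsP [e /andP [eF Hj]] Hp Hy.
case: (IH z Hp Hy) => s /andP [Hs He]; exists ((e, z) :: s); by rewrite /= eF Hj Hs.
Qed.

Lemma walk_end_in (x : V) (s : seq (E * V)) : s != [::] -> walk_end x s \in map snd s.
Proof.
elim: s x => [|[e y] s IH] x //= _; case: s IH => [|p s] IH; first by rewrite /walk_end /= inE.
by rewrite walk_end_cons inE IH ?orbT.
Qed.

Lemma walk_uniq (F : {set E}) (x : V) (s : seq (E * V)) : is_walk_in ends F x s -> exists s',
  [/\ is_walk_in ends F x s', walk_end x s' = walk_end x s & uniq (x :: map snd s')].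
Proof.
elim: s x => [|[e z] s IH] x /=; first by move=> _; exists [::].
case/and3P => eF Hj Hs; case: (IH z Hs) => s1 [H1 E1 U1].
have [xz | xnz] := eqVneq x z.
  by exists s1; rewrite xz walk_end_cons.
case: (boolP (x \in map snd s1)) => xin.
  case/mapP: xin => [[d w] pin /= xw]; subst w.
  case/splitPr: pin H1 E1 U1 => s2 s3 H1 E1 U1.
  exists s3; move: H1; rewrite walk_cat => /andP [_] /= /and3P [_ _ H3]; split => //.
    by rewrite walk_end_cons -E1 walk_end_cat walk_end_cons.
  by move: U1; rewrite /= map_cat cat_uniq => /andP [_] /and3P [].
exists ((e, z) :: s1); split; first by rewrite /= eF Hj H1.
  by rewrite walk_end_cons E1.
by rewrite /= inE negb_or xnz xin /=; exact: U1.
Qed.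

Lemma edge_in_walk (F : {set E}) (z : V) (s : seq (E * V)) e :
  is_walk_in ends F z s -> e \in map fst s ->
  exists w u, joins ends e w u /\ u \in map snd s.
Proof.
elim: s z => [|[d y] s IH] z //= /and3P [_ Hj Hs]; rewrite inE => /orP [/eqP -> | Hin].
  by exists z, y; rewrite inE eqxx.
by case: (IH y Hs Hin) => w [u [H1 H2]]; exists w, u; rewrite inE H2 orbT.
Qed.

Lemma walk_edges_uniq (F : {set E}) (x : V) (s : seq (E * V)) :
  is_walk_in ends F x s -> uniq (x :: map snd s) -> uniq (map fst s).
Proof.
elim: s x => [|[e z] s IH] x //= /and3P [_ Hj Hs].
rewrite inE negb_or => /andP [/andP [xz xs]] /andP [zs U].
rewrite (IH z Hs) ?andbT; last by rewrite /= zs U.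
apply/negP => /(edge_in_walk Hs) [w [u [Hj' Hu]]].
case: (joins_eq Hj Hj') => Eu; subst u; by [rewrite Hu in xs | rewrite Hu in zs].
Qed.

Lemma interior_sub (s : seq (E * V)) v : v \in interior s -> v \in map snd s.
Proof. exact: mem_take. Qed.

Lemma interior_cons (e : E) (z : V) (s : seq (E * V)) : s != [::] ->
  interior ((e, z) :: s) = z :: interior s.
Proof. by case: s. Qed.

Lemma end_notin_interior (x : V) (s : seq (E * V)) :
  uniq (map snd s) -> s != [::] -> walk_end x s \notin interior s.
Proof.
rewrite /interior /walk_end -(size_map snd) => U _.
move: U; case/lastP: (map snd s) => [|l a] //.
by rewrite size_rcons /= last_rcons -cats1 take_size_cat // cat_uniq /= orbF andbT => /andP [_].
Qed.

Lemma path_mono (F G : {set E}) (x y : V) (s : seq (E * V)) : F \subset G ->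
  is_path_in ends F x y s -> is_path_in ends G x y s.
Proof.
move=> FG /and5P [H1 H2 H3 H4 /andP [H5 H6]].
by rewrite /is_path_in H1 (walk_mono FG H2) H3 H4 H5 H6.
Qed.

Lemma acyclic_mono (F G : {set E}) : F \subset G -> acyclic_in ends G -> acyclic_in ends F.
Proof.
move=> FG HG x s; apply/negP => /(path_mono FG) H; by move: (HG x s); rewrite H.
Qed.

Lemma acyclic_edge (F : {set E}) e x y : acyclic_in ends F -> e \in F -> joins ends e x y ->
  x != y /\ ~~ conn (F :\ e) x y.
Proof.
move=> HF eF Hj.
have [xy | xny] := eqVneq x y.
  subst y; move: (HF x [:: (e, x)]); by rewrite /is_path_in /= eF Hj /walk_end /= eqxx.
split => //; apply/negP; rewrite /conn conn_sym => /conn_walk [s0 /andP [Hs0 /eqP Es0]].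
case: (walk_uniq Hs0) => s [Hs Es Us].
have sne : s != [::] by apply/eqP => sn; move: Es; rewrite sn Es0 /walk_end /= => yx; rewrite yx eqxx in xny.
have HsF : is_walk_in ends F y s by apply: walk_mono Hs; exact: subD1set.
have eS : e \notin map fst s.
  apply/negP => /mapP [[d w] Hin /= ed]; subst d.
  have : all (fun p => p.1 \in F :\ e) s.
    clear -Hs; elim: s y Hs => [|[d w] s IH] y //=.
    by case/and3P => dF _ /IH ->; rewrite dF.
  by move/allP/(_ (e, w) Hin); rewrite /= in_setD1 eqxx.
have U2 : uniq (map snd ((e, y) :: s)) := Us.
have Hint : x \notin interior ((e, y) :: s).
  by have := @end_notin_interior x _ U2 isT; rewrite walk_end_cons Es Es0.
have Hp : is_path_in ends F x x ((e, y) :: s).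
  apply/and5P; split => //; first by rewrite /= eF Hj HsF.
    by rewrite walk_end_cons Es Es0.
  by rewrite Hint andbT /= eS (walk_edges_uniq Hs Us).
by move: (HF x ((e, y) :: s)); rewrite Hp.
Qed.

Definition ncomp (F : {set E}) := #|[set root (adj F) x | x : V]|.

Lemma conn_mono (F G : {set E}) x y : F \subset G -> conn F x y -> conn G x y.
Proof.
move=> FG /conn_walk [s /andP [Hs /eqP <-]]; apply: walk_conn; exact: walk_mono Hs.
Qed.

Lemma conn_isolated (F : {set E}) w z :
  (forall e, e \in F -> ~~ incident ends e w) -> conn F w z -> z = w.
Proof.
move=> Hw /connectP [[|u p] /=]; first by move=> _ ->.
case/andP => /existsP [e /andP [eF Hj]] _ _.
by move: (Hw e eF); rewrite (joins_inc Hj).1.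
Qed.

Lemma count_reps (F : {set E}) (W : {set V}) :
  (forall v, exists2 w, w \in W & conn F v w) ->
  {in W &, forall a b, conn F a b -> a = b} -> ncomp F = #|W|.
Proof.
move=> Hcov Hpw; rewrite /ncomp.
have -> : [set root (adj F) x | x : V] = [set root (adj F) w | w in W].
  apply/setP => r; apply/imsetP/imsetP => [[x _ ->] | [w wW ->]]; last by exists w.
  case: (Hcov x) => w wW xw; exists w => //; exact/(rootP (conn_sym F)).
apply: card_in_imset => a b aW bW /(rootP (conn_sym F)); exact: Hpw.
Qed.

Lemma forest_card (F : {set E}) : acyclic_in ends F -> #|F| + ncomp F = #|V|.
Proof.
move: {2}#|F| (erefl #|F|) => n; elim: n F => [|n IH] F Fn HF.
  have F0 : F = set0 by apply/eqP; rewrite -cards_eq0 Fn.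
  rewrite Fn add0n -cardsT; apply: count_reps => [v|a b _ _ ab].
    by exists v; rewrite ?in_setT //; exact: connect0.
  by symmetry; apply: conn_isolated ab => e; rewrite F0 in_set0.
have : 0 < #|F| by rewrite Fn.
case/card_gt0P => e eF.
set x := (ends e).1; set y := (ends e).2.
have Hj : joins ends e x y by rewrite /joins /x /y -surjective_pairing eqxx.
case: (acyclic_edge HF eF Hj) => xny nc.
set F' := F :\ e.
have F'n : #|F'| = n by move: Fn; rewrite (cardsD1 e) eF add1n => -[].
have HF' : acyclic_in ends F' by apply: acyclic_mono HF; exact: subD1set.
have := IH F' F'n HF'.
suff HH : ncomp F' = (ncomp F).+1 by rewrite HH F'n Fn => H; lia.
have sF' : F' \subset F by exact: subD1set.
set f := root (adj F').
set rx := f x; set ry := f y.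
have rxy : rx != ry by apply/negP => /eqP /(rootP (conn_sym F')) H; move: nc; rewrite /conn H.
set W := [set f v | v : V] :\ ry.
have -> : ncomp F = #|W|.
  set g := fun v => if f v == ry then rx else f v.
  have Hg : forall a b, conn F a b -> g a = g b.
    move=> a b /connectP [p]; elim: p a => [|z p IHp] a /=; first by move=> _ ->.
    case/andP => /existsP [d /andP [dF Hd]] Hp Hb; rewrite -(IHp z Hp Hb).
    have [de | dne] := eqVneq d e.
      subst d; have gx : g x = rx by rewrite /g (negbTE rxy).
      have gy : g y = rx by rewrite /g eqxx.
      have Exy : ends e = (x, y) by rewrite /x /y -surjective_pairing.
      move: Hd; rewrite /joins Exy.
      by case/orP => /eqP [<- <-]; rewrite ?gx ?gy.
    have : conn F' a z by apply: connect1; apply/existsP; exists d; rewrite Hd in_setD1 dne dF.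
    by move/(rootP (conn_sym F')); rewrite /g -/f => ->.
  apply: count_reps => [v|a b].
    have [fv | fv] := eqVneq (f v) ry.
      exists rx; first by rewrite in_setD1 rxy imset_f.
      apply: connect_trans (conn_mono sF' (connect_root _ x)).
      apply: connect_trans (connect1 (_ : adj F y x)).
        by apply: (conn_mono sF'); apply/(rootP (conn_sym F')); rewrite -/f fv.
      by apply/existsP; exists e; rewrite eF joins_sym.
    exists (f v); first by rewrite in_setD1 fv imset_f.
    exact: (conn_mono sF' (connect_root _ v)).
  have ga : forall c, c \in W -> g c = c.
    move=> c; rewrite in_setD1 => /andP [cn /imsetP [c' _ Ec]].
    have fc : f c = c by rewrite Ec /f (root_root (conn_sym F')).
    by rewrite /g fc (negbTE cn).
  by move=> aW bW /Hg; rewrite !ga.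
by rewrite /ncomp (cardsD1 ry) imset_f.
Qed.

End Walks.

Section Seg.
Variables (V E : finType) (ends : E -> V * V) (R : {set V}) (k : nat) (seg : E -> 'I_k).
Variable Hdisj : forall (i j : 'I_k) v, i != j -> v \in seg_vertices ends seg i ->
  v \in seg_vertices ends seg j -> v \in R.
Local Notation Sv := (seg_vertices ends seg).

Lemma incident_seg e v : incident ends e v -> v \in Sv (seg e).
Proof. by move=> H; rewrite inE; apply/existsP; exists e; rewrite eqxx. Qed.

Lemma unique_seg v i j : v \notin R -> v \in Sv i -> v \in Sv j -> i = j.
Proof.
move=> vR vi vj; apply/eqP; apply/negP => /negP ij.
by move: (Hdisj ij vi vj); rewrite (negbTE vR).
Qed.

Lemma colour_walk (F : {set E}) v j (s : seq (E * V)) : v \notin R -> v \in Sv j ->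
  is_walk_in ends F v s -> all (fun u => u \notin R) (interior s) ->
  all (fun p => seg p.1 == j) s.
Proof.
elim: s v => [|[e z] s IH] v //= vR vj /and3P [_ Hj Hs] Hint.
have ej : seg e = j.
  by apply: (unique_seg vR _ vj); apply: incident_seg; exact: (joins_inc Hj).1.
rewrite ej eqxx /=.
case: (eqVneq s [::]) => [-> // | sne].
move: Hint; rewrite interior_cons // /= => /andP [zR Hint].
apply: IH zR _ Hs Hint; rewrite -ej; apply: incident_seg; exact: (joins_inc Hj).2.
Qed.

Lemma first_R_prefix (x : V) (s : seq (E * V)) : walk_end x s \in R -> s != [::] ->
  exists t u, [/\ s = t ++ u, t != [::], walk_end x t \in R &
                  all (fun u => u \notin R) (interior t)].
Proof.
elim: s x => [|[e z] s IH] x // Hend _.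
case: (boolP (z \in R)) => zR.
  by exists [:: (e, z)], s; split.
case: (eqVneq s [::]) => [sn | sne].
  by move: Hend; rewrite sn /walk_end /= (negbTE zR).
case: (IH z Hend sne) => t [u [-> tne Ht Hint]].
exists ((e, z) :: t), u; split => //; rewrite interior_cons //=; exact/andP.
Qed.

Lemma walk_colour (F : {set E}) x (s : seq (E * V)) i : is_walk_in ends F x s ->
  all (fun p => seg p.1 == i) s -> is_walk_in ends (F :&: [set e | seg e == i]) x s.
Proof.
elim: s x => [|[e z] s IH] x //= /and3P [eF Hj Hs] /andP [ei Ha].
by rewrite inE eF inE ei Hj IH.
Qed.

Lemma end_in_seg (F : {set E}) x (s : seq (E * V)) i : s != [::] ->
  is_walk_in ends F x s -> all (fun p => seg p.1 == i) s ->
  walk_end x s \in Sv i /\ x \in Sv i.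
Proof.
elim: s x => [|[e z] s IH] x //= _ /and3P [eF Hj Hs] /andP [/eqP ei Ha].
have xi : x \in Sv i by rewrite -ei; apply: incident_seg; exact: (joins_inc Hj).1.
split => //; rewrite walk_end_cons.
case: (eqVneq s [::]) => [sn | sne].
  by rewrite sn /walk_end /= -ei; apply: incident_seg; exact: (joins_inc Hj).2.
by case: (IH z sne Hs Ha).
Qed.

End Seg.

Lemma two_elems (T : finType) (S : {set T}) a b c : #|S| = 2 -> a \in S -> b \in S ->
  a != b -> c \in S -> c = a \/ c = b.
Proof.
move=> S2 aS bS ab cS; have [ca | cna] := eqVneq c a; first by left.
right; move: S2; rewrite (cardsD1 a) aS add1n => -[] /eqP /cards1P [d Hd].
have : b \in S :\ a by rewrite in_setD1 eq_sym ab bS.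
have : c \in S :\ a by rewrite in_setD1 cna cS.
by rewrite Hd !inE => /eqP -> /eqP ->.
Qed.

Theorem lemma5p10 (V E : finType) (ends : E -> V * V) (R : {set V})
    (k k' : nat) (seg : E -> 'I_k) (T : {set E}) :
  graph_connected ends ->
  (forall v, ~ is_tail ends R v) ->
  segment_decomposition ends R k' seg ->
  is_spanning_tree ends setT T ->
  exists I : {set 'I_k},
    (forall i : 'I_k, i \in I <->
       (i < k' /\ is_spanning_tree ends (seg_vertices ends seg i)
                                        (T :&: [set e | seg e == i]))) /\
    #|I| = #|R| - 1.
Proof.
move=> Hconn _ [Hk' Hne Hcard [H2a H2b] [H1a H1b Hdisj Hcov]] [_ HTconn HTac].
case: (set_0Vmem R) => [R0 | [r0 r0R]].
  exists set0; split; last by rewrite R0 !cards0.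
  move=> i; rewrite in_set0; split => // [[ik _]].
  by move: (Hcard i); rewrite R0 setI0 cards0 ik.
pose Sv := seg_vertices ends seg.
pose Ti i := T :&: [set e | seg e == i].
pose I := [set i : 'I_k | (i < k') && [forall x, [forall y,
            (x \in Sv i) ==> (y \in Sv i) ==> conn ends (Ti i) x y]]].
exists I; split.
  move=> i; rewrite inE; split.
    case/andP => ik /forallP Hall; split => //; split.
    - move=> e; rewrite inE => /andP [_]; rewrite inE => /eqP <-.
      by split; apply: incident_seg; rewrite /incident eqxx ?orbT.
    - move=> x y xi yi; apply: conn_walk; move: (Hall x) => /forallP /(_ y).
      by rewrite xi yi.
    - by apply: acyclic_mono HTac; exact: subsetIl.
  case => ik [_ Hc _]; rewrite ik; apply/forallP => x; apply/forallP => y.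
  apply/implyP => xi; apply/implyP => yi.
  by case: (Hc x y xi yi) => s /andP [Hs /eqP <-]; exact: walk_conn.
have Hdisj' : forall (i j : 'I_k) v, i != j -> v \in seg_vertices ends seg i ->
  v \in seg_vertices ends seg j -> v \in R by [].
have TA : forall x y, conn ends T x y.
  move=> x y; case: (HTconn x y (in_setT _) (in_setT _)) => s /andP [Hs /eqP <-].
  exact: walk_conn.
have K1 : forall i : 'I_k, i < k' -> forall u, u \in Sv i ->
    exists2 r, r \in Sv i :&: R & conn ends (Ti i) u r.
  move=> i ik u ui; case: (boolP (u \in R)) => uR.
    by exists u; [rewrite inE ui uR | exact: connect0].
  case/conn_walk: (TA u r0) => s /andP [Hs /eqP Es].
  have sne : s != [::] by apply/eqP => sn; move: Es uR; rewrite sn /walk_end /= => ->; rewrite r0R.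
  have Hend : walk_end u s \in R by rewrite Es.
  case: (first_R_prefix Hend sne) => t [w [st tne tR Hint]].
  move: Hs; rewrite st walk_cat => /andP [Ht _].
  have Hc := colour_walk Hdisj uR ui Ht Hint.
  exists (walk_end u t); last by apply: walk_conn; exact: walk_colour.
  by rewrite inE tR (end_in_seg tne Ht Hc).1.
have K2 : forall i : 'I_k, i < k' -> forall r1 r2, r1 != r2 -> r1 \in Sv i :&: R ->
    r2 \in Sv i :&: R -> conn ends (Ti i) r1 r2 -> i \in I.
  move=> i ik r1 r2 r12 r1i r2i c12; rewrite inE ik /=.
  apply/forallP => x; apply/forallP => y; apply/implyP => xi; apply/implyP => yi.
  move: (Hcard i); rewrite ik => H2.
  have Hr : forall z, z \in Sv i :&: R -> conn ends (Ti i) r1 z.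
    move=> z zi; case: (two_elems H2 r1i r2i r12 zi) => ->; [exact: connect0 | exact: c12].
  case: (K1 i ik x xi) => rx rxi cx; case: (K1 i ik y yi) => ry ryi cy.
  rewrite /conn in cx cy Hr *.
  apply: connect_trans cx _.
  apply: connect_trans (_ : connect _ rx r1) _; first by rewrite conn_sym; exact: Hr.
  apply: connect_trans (Hr _ ryi) _; by rewrite conn_sym.
pose A := T :&: [set e | seg e \notin I].
have K3 : forall r1 r2, r1 \in R -> r2 \in R -> conn ends A r1 r2 -> r1 = r2.
  move=> r1 r2 r1R r2R c12; apply/eqP; apply/negP => /negP r12.
  case/conn_walk: c12 => s0 /andP [Hs0 /eqP Es0].
  case: (walk_uniq Hs0) => s [Hs Es Us].
  have sne : s != [::] by apply/eqP => sn; move: Es; rewrite sn Es0 /walk_end /= => E12; rewrite E12 eqxx in r12.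
  have Hend : walk_end r1 s \in R by rewrite Es Es0.
  case: (first_R_prefix Hend sne) => t [w [st tne tR Hint]].
  move: Hs; rewrite st walk_cat => /andP [Ht _].
  have Ut : uniq (r1 :: map snd t) by move: Us; rewrite st map_cat -cat_cons cat_uniq => /andP [].
  set v := walk_end r1 t in tR.
  have vin : v \in map snd t by exact: walk_end_in.
  have r1v : r1 != v by apply: (contraTneq _ vin) => <-; case/andP: Ut.
  have Hadm : admissible_path ends R r1 v t.
    split => //; apply/and5P; split => //.
    - by apply: walk_mono Ht; exact: subsetT.
    - by case/andP: Ut.
    - apply/andP; split; first exact: walk_edges_uniq Ht Ut.
      by apply/negP => /interior_sub H; move: Ut; rewrite /= H.
  case: (H2a r1 v t r1v Hadm) => i ik Hc.
  have HtT : is_walk_in ends T r1 t by apply: walk_mono Ht; exact: subsetIl.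
  have [vi r1i] := end_in_seg tne HtT Hc.
  have iI : i \in I.
    apply: (K2 i ik r1 v r1v); [by rewrite inE r1i r1R | by rewrite inE vi tR | ].
    apply: walk_conn; exact: walk_colour.
  case: t tne Ht Hc {Ut vin r1v Hadm HtT vi r1i v tR Hint st} => [|[e z] t] // _ /= /and3P [eA _ _] /andP [/eqP ei _].
  by move: iI eA; clearbody I; rewrite /A !inE ei => -> /andP [_].
have HI : forall i, i \in I -> i < k' /\
    (forall x y, x \in Sv i -> y \in Sv i -> conn ends (Ti i) x y).
  move=> i; rewrite inE => /andP [ik /forallP Hall]; split => // x y xi yi.
  by move: (Hall x) => /forallP /(_ y); rewrite xi yi.
clearbody I.
have HTacA : acyclic_in ends A by apply: acyclic_mono HTac; exact: subsetIl.
have K4 : forall u j w, u \notin R -> u \in Sv j -> j \in I -> conn ends A u w -> w = u.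
  move=> u j w uR uj jI; apply: conn_isolated => e eA; apply/negP => /(incident_seg seg) ue.
  have ej := unique_seg Hdisj uR ue uj.
  by move: eA; rewrite in_setI in_set ej jI andbF.
have [i0 _] := Hcov r0.
pose p v := odflt i0 [pick j | v \in Sv j].
have p_spec : forall v j, v \notin R -> v \in Sv j -> p v = j.
  move=> v j vR vj; rewrite /p; case: pickP => [j' Hj' | H] /=.
    exact: (unique_seg Hdisj vR Hj' vj).
  by move: (H j); rewrite vj.
have pS : forall v, v \notin R -> v \in Sv (p v).
  by move=> v vR; case: (Hcov v) => j vj; rewrite (p_spec v j vR vj).
pose U := [set v | (v \notin R) && (p v \in I)].
have memU : forall v, v \in U = (v \notin R) && (p v \in I) by move=> v; rewrite inE.
clearbody U.
have TA' : forall x y, conn ends A x y -> conn ends A y x.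
  by move=> x y; rewrite /conn conn_sym.
have cA : ncomp ends A = #|R| + #|U|.
  have RU : R :&: U = set0.
    by apply/setP => v; rewrite in_setI memU in_set0; case: (v \in R).
  rewrite -cardsUI RU cards0 addn0.
  apply: count_reps => [v | a b].
    case: (boolP (v \in R)) => vR; first by exists v; rewrite ?in_setU ?vR //; exact: connect0.
    case: (boolP (p v \in I)) => pI.
      by exists v; rewrite ?in_setU ?memU ?vR ?pI ?orbT //; exact: connect0.
    have vj := pS v vR.
    case/conn_walk: (TA v r0) => s /andP [Hs /eqP Es].
    have sne : s != [::] by apply/eqP => sn; move: Es vR; rewrite sn /walk_end /= => ->; rewrite r0R.
    have Hend : walk_end v s \in R by rewrite Es.
    case: (first_R_prefix Hend sne) => t [w [st tne tR Hint]].
    move: Hs; rewrite st walk_cat => /andP [Ht _].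
    have Hc := colour_walk Hdisj vR vj Ht Hint.
    exists (walk_end v t); first by rewrite in_setU tR.
    apply: walk_conn; apply: walk_mono (walk_colour Ht Hc).
    apply/subsetP => e; rewrite !in_setI !in_set => /andP [-> /eqP ->]; by rewrite pI.
  rewrite !in_setU !memU => Ha Hb cab.
  case/orP: Ha => [aR | /andP [aR aI]]; last by rewrite (K4 a (p a) b aR (pS a aR) aI cab).
  case/orP: Hb => [bR | /andP [bR bI]]; last by rewrite (K4 b (p b) a bR (pS b bR) bI (TA' _ _ cab)).
  exact: K3.
have fA := forest_card HTacA.
have fT : #|T| + 1 = #|V|.
  rewrite -(forest_card HTac); congr (_ + _); symmetry; rewrite -(cards1 r0).
  apply: count_reps => [v | a b]; first by exists r0; rewrite ?in_set1 //.
  by rewrite !in_set1 => /eqP -> /eqP ->.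
have fTi : forall i, i \in I -> #|Ti i| + 1 = #|Sv i|.
  move=> i iI; have [ik Hall] := HI i iI.
  have HTi : acyclic_in ends (Ti i) by apply: acyclic_mono HTac; exact: subsetIl.
  have := forest_card HTi.
  have : 0 < #|Sv i :&: R| by rewrite Hcard ik.
  case/card_gt0P => s0; rewrite in_setI => /andP [s0i _].
  have iso : forall a z, a \notin Sv i -> conn ends (Ti i) a z -> z = a.
    move=> a z ai; apply: conn_isolated => e; rewrite in_setI in_set => /andP [_ /eqP ei].
    by apply/negP => /(incident_seg seg); rewrite ei (negbTE ai).
  have -> : ncomp ends (Ti i) = #|s0 |: ~: Sv i|.
    apply: count_reps => [v | a b].
      case: (boolP (v \in Sv i)) => vi.
        by exists s0; rewrite ?in_setU1 ?eqxx //; exact: Hall.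
      by exists v; rewrite ?in_setU1 ?in_setC ?vi ?orbT //; exact: connect0.
    rewrite !in_setU1 !in_setC => Ha Hb cab.
    case: (boolP (a \in Sv i)) => ai; last by rewrite (iso a b ai cab).
    case: (boolP (b \in Sv i)) => bi; last first.
      by rewrite (iso b a bi) //; rewrite /conn conn_sym.
    by move: Ha Hb; rewrite ai bi !orbF => /eqP -> /eqP ->.
  rewrite cardsU1 in_setC s0i /= => H.
  move: H; rewrite -(cardsC (Sv i)) => H; clearbody Sv Ti; clear -H; lia.
have S1 : #|T| = #|A| + \sum_(i in I) #|Ti i|.
  rewrite -(cardsID [set e | seg e \in I] T).
  have EA : T :\: [set e | seg e \in I] = A.
    by apply/setP => e; rewrite /A !inE andbC.
  rewrite EA.
  rewrite addnC; congr (_ + _).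
  rewrite -sum1_card (partition_big seg (fun i => i \in I)) => [|e]; last first.
    by rewrite in_setI in_set => /andP [].
  apply: eq_bigr => i iI; rewrite sum1dep_card; apply: eq_card => e.
  rewrite !in_set; case: eqP => [-> | _]; by rewrite ?iI ?andbT ?andbF.
have S2 : #|U| = \sum_(i in I) #|Sv i :\: R|.
  rewrite -sum1_card (partition_big p (fun i => i \in I)) => [|v]; last first.
    by rewrite memU => /andP [].
  apply: eq_bigr => i iI; rewrite sum1dep_card; apply: eq_card => v.
  rewrite in_set memU in_setD; apply/idP/idP.
    by case/andP => /andP [vR _] /eqP <-; rewrite vR pS.
  by case/andP => vR vi; rewrite vR (p_spec v i vR vi) iI eqxx.
have S3 : forall i, i \in I -> #|Sv i| = #|Sv i :\: R| + 2.
  move=> i iI; have [ik _] := HI i iI.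
  by rewrite -(cardsID R (Sv i)) Hcard ik addnC.
have ST : \sum_(i in I) #|Ti i| + #|I| = #|U| + #|I| * 2.
  rewrite S2 -sum_nat_const -sum1_card -!big_split /=; apply: eq_bigr => i iI.
  by rewrite (fTi i iI) (S3 i iI).
rewrite cA in fA; move: fT fA S1 ST; clearbody Sv Ti A p; clear; set nI := #|I|; lia.
Qed.
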